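(* Let $\phi$ be a reduced Boolean formula in the variables $x_1,\dots,x_n$ defining a set $S \subseteq \{0,1\}^n$, and let $Q \subseteq [0,1]^n$ be any convex set containing $S$. If $Q$ satisfies all inequalities of notch at most $\nu$ that are valid for $S$, then $\phi(Q)$ satisfies all inequalities of notch at most $\nu+1$ that are valid for $S$. Moreover, if $Q$ is a polytope defined by an extended formulation of size $\sigma$, then $\phi(Q)$ is a polytope that can be defined by an extended formulation of size $|\phi|\sigma$.
   Context: Boolean formulas are built from input variables $x_1,\dots,x_n$ using $\wedge$, $\vee$, $\neg$, interpreted as functions $\{0,1\}^n\to\{0,1\}$; $\phi$ defines $S=\{x\in\{0,1\}^n:\phi(x)=1\}$. A formula is reduced if negations apply only to input variables. The size $|\phi|$ is the total number of occurrences of input variables. For a reduced $\phi$ and convex $Q\subseteq[0,1]^n$, $\phi(Q)$ is defined recursively: $x_i$ is replaced by $\{x \in Q : x_i = 1\}$; $\neg x_i$ by $\{x \in Q : x_i = 0\}$; a conjunction by the intersection of the corresponding sets; a disjunction by the convex hull of the union of the corresponding sets. An inequality in standard form is $\sum_{i \in I^+} c_i x_i + \sum_{i\in I^-} c_i(1-x_i) \ge \delta$ where $I^+,I^-$ partition $[n]$, $c \in \mathbb{R}^n_{\ge 0}$, $\delta\ge 0$ (every linear inequality can be written with such $I^\pm$, $c$, and the considered ones have $\delta \ge 0$). Its notch is the smallest number $\nu$ such that $\sum_{j\in J} c_j\ge\delta$ for every $J\subseteq[n]$ with $|J|\ge \nu$. An extended formulation of size $m$ of a polytope $P\subseteq\mathbb{R}^n$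 is a description $P=\{x:\exists y\in\mathbb{R}^d,\ Ay\ge b,\ x=Ty+t\}$ with $A$ having $m$ rows. *)

(* Defs.v *)
From HB Require Import structures.
From mathcomp Require Import all_boot all_order all_algebra.
From mathcomp Require Import reals.

Set Implicit Arguments.
Unset Strict Implicit.
Unset Printing Implicit Defensive.

Import Order.TTheory GRing.Theory Num.Theory.
Local Open Scope ring_scope.

(* Boolean formulas over variables x_0, ..., x_{n-1} (paper: x_1..x_n). *)
Inductive formula (n : nat) : Type :=
  | FVar of 'I_n
  | FNeg of formula n
  | FAnd of formula n & formula n
  | FOr of formula n & formula n.

Arguments FVar {n}.
Arguments FNeg {n}.
Arguments FAnd {n}.
Arguments FOr {n}.

Fixpoint feval (n : nat) (phi : formula n) (b : 'I_n -> bool) : bool :=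
  match phi with
  | FVar i => b i
  | FNeg p => ~~ feval p b
  | FAnd p q => feval p b && feval q b
  | FOr p q => feval p b || feval q b
  end.

Fixpoint reduced (n : nat) (phi : formula n) : Prop :=
  match phi with
  | FVar _ => True
  | FNeg p => match p with FVar _ => True | _ => False end
  | FAnd p q => reduced p /\ reduced q
  | FOr p q => reduced p /\ reduced q
  end.

Fixpoint fsize (n : nat) (phi : formula n) : nat :=
  match phi with
  | FVar _ => 1
  | FNeg p => fsize p
  | FAnd p q => fsize p + fsize q
  | FOr p q => fsize p + fsize q
  end.

Section Geometry.
Variable R : realType.
Variable n : nat.

Definition pt := 'cV[R]_n.
Definition pset := pt -> Prop.

Definition coord (x : pt) (i : 'I_n) : R := x i ord0.

Definition formula_set (phi : formula n) : pset :=
  fun x => (forall i, coord x i = 0 \/ coord x i = 1) /\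
           feval phi (fun i => coord x i == 1).

Definition set_incl (A B : pset) : Prop := forall x, A x -> B x.

Definition in_unit_cube (Q : pset) : Prop :=
  forall x, Q x -> forall i, 0 <= coord x i <= 1.

Definition convex (Q : pset) : Prop :=
  forall x y (t : R), Q x -> Q y -> 0 <= t <= 1 -> Q (t *: x + (1 - t) *: y).

Definition conv (A : pset) : pset :=
  fun x => exists (k : nat) (p : 'I_k -> pt) (w : 'I_k -> R),
    (forall j, A (p j)) /\ (forall j, 0 <= w j) /\
    \sum_(j < k) w j = 1 /\ x = \sum_(j < k) w j *: p j.

(* phi(Q), defined recursively for reduced formulas (the value on a
   negation of a non-variable is irrelevant: such formulas are not reduced). *)
Fixpoint phiQ (Q : pset) (phi : formula n) : pset :=
  match phi with
  | FVar i => fun x => Q x /\ coord x i = 1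
  | FNeg p => match p with
              | FVar i => fun x => Q x /\ coord x i = 0
              | _ => fun _ => False
              end
  | FAnd p q => fun x => phiQ Q p x /\ phiQ Q q x
  | FOr p q => conv (fun x => phiQ Q p x \/ phiQ Q q x)
  end.

(* Standard-form inequality, given by s (s i = true iff i in I^+), the
   coefficients c >= 0 and right-hand side delta >= 0:
     sum_{i in I^+} c_i x_i + sum_{i in I^-} c_i (1 - x_i) >= delta. *)
Definition sf_lhs (s : 'I_n -> bool) (c : 'I_n -> R) (x : pt) : R :=
  \sum_(i < n) (if s i then c i * coord x i else c i * (1 - coord x i)).

Definition sf_satisfies (s : 'I_n -> bool) (c : 'I_n -> R) (delta : R)
  (x : pt) : Prop := delta <= sf_lhs s c x.

Definition valid_for (S : pset) s c delta : Prop :=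
  forall x, S x -> sf_satisfies s c delta x.

Definition notch_prop (c : 'I_n -> R) (delta : R) : pred nat :=
  fun nu => [forall J : {set 'I_n}, (nu <= #|J|)%N ==> (delta <= \sum_(j in J) c j)].

Lemma notch_exists (c : 'I_n -> R) (delta : R) : exists nu, notch_prop c delta nu.
Proof.
exists n.+1; apply/forallP => J; apply/implyP => HJ.
by move: (max_card J); rewrite card_ord => /(leq_trans HJ); rewrite ltnn.
Qed.

Definition notch (c : 'I_n -> R) (delta : R) : nat := ex_minn (notch_exists c delta).

Definition satisfies_notch_valid (Q S : pset) (nu : nat) : Prop :=
  forall (s : 'I_n -> bool) (c : 'I_n -> R) (delta : R),
    (forall i, 0 <= c i) -> 0 <= delta ->
    (notch c delta <= nu)%N -> valid_for S s c delta ->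
    forall x, Q x -> sf_satisfies s c delta x.

Definition polytope (P : pset) : Prop :=
  exists (k : nat) (p : 'I_k -> pt),
    forall x, P x <-> conv (fun z => exists j, z = p j) x.

Definition has_ext_form (P : pset) (m : nat) : Prop :=
  exists (d : nat) (A : 'M[R]_(m, d)) (b : 'cV[R]_m) (T : 'M[R]_(n, d)) (t : pt),
    forall x, P x <-> exists y : 'cV[R]_d,
      (forall i : 'I_m, b i ord0 <= (A *m y) i ord0) /\ x = T *m y + t.

End Geometry.

(* Main.v *)
Require Import Defs.
From HB Require Import structures.
From mathcomp Require Import all_boot all_order all_algebra.
From mathcomp Require Import reals boolp.
From mathcomp Require Import ring lra zify.

Set Implicit Arguments.
Unset Strict Implicit.
Unset Printing Implicit Defensive.

Import Order.TTheory GRing.Theory Num.Theory.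
Local Open Scope ring_scope.

Section Part1.
Variable R : realType.
Variable n : nat.

Definition litv (s : 'I_n -> bool) (i : 'I_n) (y : pt R n) : R :=
  if s i then y i ord0 else 1 - y i ord0.

Lemma sf_lhsE s c (y : pt R n) : sf_lhs s c y = \sum_i c i * litv s i y.
Proof. by apply: eq_bigr => i _; rewrite /litv /Defs.coord; case: (s i). Qed.

Lemma litv_ge0 s i (y : pt R n) : 0 <= y i ord0 <= 1 -> 0 <= litv s i y.
Proof. by case/andP; rewrite /litv; case: (s i) => // ? ?; rewrite subr_ge0. Qed.

Lemma lhs_ge0 s c (y : pt R n) : (forall i, 0 <= c i) ->
  (forall i, 0 <= y i ord0 <= 1) -> 0 <= sf_lhs s c y.
Proof.
move=> Hc Hy; rewrite sf_lhsE; apply: sumr_ge0 => i _.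
by apply: mulr_ge0; [exact: Hc | exact: litv_ge0].
Qed.

Lemma lhs_conv s c d (A : pset R n) x :
  (forall z, A z -> d <= sf_lhs s c z) -> conv A x -> d <= sf_lhs s c x.
Proof.
move=> HA [k [p [w [Hp [Hw [Hs ->]]]]]].
have E : sf_lhs s c (\sum_(j < k) w j *: p j) = \sum_(j < k) w j * sf_lhs s c (p j).
  rewrite sf_lhsE.
  transitivity (\sum_i \sum_(j < k) w j * (c i * litv s i (p j))).
    apply: eq_bigr => i _; rewrite /litv; case: (s i).
      rewrite summxE mulr_sumr; apply: eq_bigr => j _; rewrite mxE.
      by rewrite mulrCA.
    rewrite -{1}Hs summxE -sumrB mulr_sumr; apply: eq_bigr => j _.
    by rewrite mxE -{1}(mulr1 (w j)) -mulrBr mulrCA.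
  by rewrite exchange_big; apply: eq_bigr => j _; rewrite sf_lhsE mulr_sumr.
rewrite E -[d]mul1r -Hs mulr_suml; apply: ler_sum => j _.
by apply: ler_wpM2l; [exact: Hw | exact: HA].
Qed.

Lemma notch_spec (c : 'I_n -> R) d :
  notch_prop c d (notch c d) /\ (forall m, notch_prop c d m -> (notch c d <= m)%N).
Proof. by rewrite /notch; case: ex_minnP => m Hm Hmin; split. Qed.

Lemma factA (Q S : pset R n) nu s c d (y : pt R n) i :
  satisfies_notch_valid Q S nu -> (forall j, 0 <= c j) -> 0 <= d ->
  (notch c d <= nu.+1)%N -> valid_for S s c d ->
  (forall z, S z -> forall j, z j ord0 = 0 \/ z j ord0 = 1) ->
  Q y -> (forall j, 0 <= y j ord0 <= 1) -> litv s i y = 1 -> d <= sf_lhs s c y.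
Proof.
move=> HQ Hc Hd Hn Hval S01 Qy Cy Hl.
have split_i : forall s' c' (z : pt R n), sf_lhs s' c' z =
    c' i * litv s' i z + \sum_(j < n | j != i) c' j * litv s' j z.
  by move=> s' c' z; rewrite sf_lhsE (bigD1 i).
case: (lerP (c i) d) => Hci; last first.
  rewrite split_i Hl mulr1; apply: le_trans (ltW Hci) _; rewrite lerDl.
  by apply: sumr_ge0 => j _; apply: mulr_ge0 => //; exact: litv_ge0.
pose s' := fun j => if j == i then ~~ s i else s j.
pose c' := fun j => if j == i then d - c i else c j.
have key : forall z, sf_lhs s' c' z =
   sf_lhs s c z - c i * litv s i z + (d - c i) * (1 - litv s i z).
  move=> z; rewrite !split_i.
  have -> : litv s' i z = 1 - litv s i z.
    by rewrite /litv /s' eqxx; case: (s i) => //=; rewrite subKr.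
  have -> : c' i = d - c i by rewrite /c' eqxx.
  have -> : \sum_(j < n | j != i) c' j * litv s' j z =
            \sum_(j < n | j != i) c j * litv s j z.
    apply: eq_bigr => j /negbTE Hj.
    by rewrite /c' /litv /s' Hj.
  ring.
have Hc' : forall j, 0 <= c' j.
  by move=> j; rewrite /c'; case: (j == i) => //; rewrite subr_ge0.
have Hd' : 0 <= d - c i by rewrite subr_ge0.
have Hn' : (notch c' (d - c i) <= nu)%N.
  apply: (notch_spec c' (d - c i)).2; apply/forallP => J; apply/implyP => HJ.
  case: (boolP (i \in J)) => HiJ.
    rewrite (bigD1 i) //= /c' eqxx lerDl; apply: sumr_ge0 => j _.
    exact: Hc'.
  have [H1 _] := notch_spec c d.
  have := forallP H1 (i |: J); rewrite cardsU1 HiJ /= => /implyP H2.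
  have HJ' : (nu.+1 <= 1 + #|J|)%N by rewrite add1n ltnS.
  have := H2 (leq_trans Hn HJ'); rewrite big_setU1 //=.
  have -> : \sum_(j in J) c' j = \sum_(j in J) c j.
    apply: eq_bigr => j Hj; rewrite /c'; case: eqP => // Hji.
    by move: HiJ; rewrite -Hji Hj.
  move=> H3; lra.
have Hval' : valid_for S s' c' (d - c i).
  move=> z Sz; rewrite /sf_satisfies key.
  have Cz : forall j, 0 <= z j ord0 <= 1.
    by move=> j; case: (S01 z Sz j) => ->; rewrite ?lexx ?ler01.
  have L : litv s i z = 0 \/ litv s i z = 1.
    by rewrite /litv; case: (s i); case: (S01 z Sz i) => ->; rewrite ?subrr ?subr0; auto.
  have := Hval z Sz; rewrite /sf_satisfies => Hz.
  have := lhs_ge0 s Hc Cz => Hz0.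
  by case: L => ->; lra.
have := HQ s' c' (d - c i) Hc' Hd' Hn' Hval' y Qy.
by rewrite /sf_satisfies key Hl; lra.
Qed.

Lemma feval_ext (psi : formula n) (b1 b2 : 'I_n -> bool) :
  (forall i, b1 i = b2 i) -> feval psi b1 = feval psi b2.
Proof. by move=> H; elim: psi => [i|p IH|p IHp q IHq|p IHp q IHq] //=; rewrite ?IH ?IHp ?IHq. Qed.

Lemma L0 (Q : pset R n) s c (psi : formula n) (y : pt R n) :
  in_unit_cube Q -> (forall j, 0 <= c j) -> phiQ Q psi y -> 0 <= sf_lhs s c y.
Proof.
move=> Hcube Hc; elim: psi y => [i|p IH|p IHp q IHq|p IHp q IHq] y /=.
- by case=> Qy _; apply: lhs_ge0 => // j; exact: Hcube.
- case: p IH => [i|?|? ?|? ?] //= _.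
  by case=> Qy _; apply: lhs_ge0 => // j; exact: Hcube.
- by case=> H _; exact: IHp.
- by apply: lhs_conv => z [] Hz; [exact: IHp | exact: IHq].
Qed.

Lemma L1 (Q S : pset R n) nu s c d :
  satisfies_notch_valid Q S nu -> in_unit_cube Q -> (forall j, 0 <= c j) -> 0 <= d ->
  (notch c d <= nu.+1)%N -> valid_for S s c d ->
  (forall z, S z -> forall j, z j ord0 = 0 \/ z j ord0 = 1) ->
  forall psi y, ~~ feval psi (fun i => ~~ s i) -> phiQ Q psi y -> d <= sf_lhs s c y.
Proof.
move=> HQ Hcube Hc Hd Hn Hval S01.
elim => [i|p IH|p IHp q IHq|p IHp q IHq] y /=.
- move=> /negPn Hs [Qy Hy]; apply: (factA (i := i) HQ) => //; first exact: Hcube.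
  by rewrite /litv Hs.
- case: p IH => [i|?|? ?|? ?] //= _.
  move=> /negPn/negbTE Hs [Qy Hy]; apply: (factA (i := i) HQ) => //; first exact: Hcube.
  by rewrite /litv Hs; move: Hy; rewrite /Defs.coord => ->; rewrite subr0.
- by rewrite negb_and => /orP [] H [Hp Hq]; [exact: IHp | exact: IHq].
- rewrite negb_or => /andP [Hp Hq]; apply: lhs_conv => z [] Hz; [exact: IHp | exact: IHq].
Qed.

Lemma part1 (phi : formula n) (Q : pset R n) :
  in_unit_cube Q ->
  (forall nu : nat,
     satisfies_notch_valid Q (@formula_set R n phi) nu ->
     satisfies_notch_valid (phiQ Q phi) (@formula_set R n phi) nu.+1).
Proof.
move=> Hcube nu HQ s c d Hc Hd Hn Hval x Hx.
have S01 : forall z : pt R n, formula_set phi z -> forall j, z j ord0 = 0 \/ z j ord0 = 1.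
  by move=> z [H _] j; exact: H.
case: (boolP (feval phi (fun i => ~~ s i))) => Hv; last first.
  exact: (L1 HQ Hcube Hc Hd Hn Hval S01 Hv Hx).
pose v : pt R n := \col_i (if s i then 0 else 1).
have Sv : formula_set phi v.
  split.
    by move=> i; rewrite /Defs.coord mxE; case: (s i); [left|right].
  rewrite (@feval_ext _ _ (fun i => ~~ s i)) // => i.
  by rewrite /Defs.coord mxE; case: (s i) => /=; rewrite ?(eq_sym 0) ?oner_eq0 ?eqxx.
have := Hval v Sv; rewrite /sf_satisfies.
have -> : sf_lhs s c v = 0.
  rewrite /sf_lhs big1 // => i _; rewrite /Defs.coord mxE.
  by case: (s i); rewrite ?mulr0 ?subrr ?mulr0.
move=> Hd0; apply: le_trans Hd0 _.
exact: (L0 s Hcube Hc Hx).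
Qed.

End Part1.
Section Part2.
Variable R : realType.
Variable n : nat.

Definition nonneg m (v : 'cV[R]_m) := forall i, 0 <= v i ord0.
Definition lv d (l : 'rV[R]_d) (y : 'cV[R]_d) : R := (l *m y) ord0 ord0.

Definition CFY m d k (A : 'M[R]_(m,d)) (E : 'M[R]_(k,d)) (l : 'rV[R]_d)
  (T : 'M[R]_(n,d)) (x : pt R n) :=
  exists y, [/\ nonneg (A *m y), E *m y = 0, lv l y = 1 & x = T *m y].

Definition CF (P : pset R n) (m : nat) : Prop :=
  exists d (A : 'M[R]_(m,d)) k (E : 'M[R]_(k,d)) (l : 'rV[R]_d) (T : 'M[R]_(n,d)),
  (forall x, P x <-> CFY A E l T x) /\
  (forall y, nonneg (A *m y) -> E *m y = 0 -> 0 <= lv l y /\ (lv l y = 0 -> T *m y = 0)).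

Lemma lvD d (l : 'rV[R]_d) y z : lv l (y + z) = lv l y + lv l z.
Proof. by rewrite /lv mulmxDr mxE. Qed.
Lemma lvZ d (l : 'rV[R]_d) a y : lv l (a *: y) = a * lv l y.
Proof. by rewrite /lv -scalemxAr mxE. Qed.
Lemma lvN d (l : 'rV[R]_d) y : lv l (- y) = - lv l y.
Proof. by rewrite /lv mulmxN mxE. Qed.
Lemma lv0 d (y : 'cV[R]_d) : lv 0 y = 0.
Proof. by rewrite /lv mul0mx mxE. Qed.
Lemma lvr0 d (l : 'rV[R]_d) : lv l 0 = 0.
Proof. by rewrite /lv mulmx0 mxE. Qed.
Lemma lv_row d1 d2 (l1 : 'rV[R]_d1) (l2 : 'rV[R]_d2) y1 y2 :
  lv (row_mx l1 l2) (col_mx y1 y2) = lv l1 y1 + lv l2 y2.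
Proof. by rewrite /lv mul_row_col mxE. Qed.

Lemma mx11P (M N : 'M[R]_1) : M = N <-> M ord0 ord0 = N ord0 ord0.
Proof. by split=> [->|H] //; rewrite [M]mx11_scalar [N]mx11_scalar H. Qed.

Lemma nonneg_col m1 m2 (u : 'cV[R]_m1) (v : 'cV[R]_m2) :
  nonneg (col_mx u v) <-> nonneg u /\ nonneg v.
Proof.
split=> [H|[Hu Hv] i]; first split=> i.
- by have := H (lshift m2 i); rewrite col_mxEu.
- by have := H (rshift m1 i); rewrite col_mxEd.
rewrite -(splitK i); case: (split i) => j /=; by rewrite ?col_mxEu ?col_mxEd.
Qed.

Lemma col_eq0 m1 m2 p (u : 'M[R]_(m1,p)) (v : 'M[R]_(m2,p)) :
  col_mx u v = 0 <-> u = 0 /\ v = 0.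
Proof.
split=> [/eqP|[-> ->]]; last by rewrite col_mx0.
by rewrite col_mx_eq0 => /andP [/eqP -> /eqP ->].
Qed.

Lemma sub0P (V : zmodType) (a b : V) : a - b = 0 <-> a = b.
Proof. split=> [/eqP|->]; last by rewrite subrr. by rewrite subr_eq0 => /eqP. Qed.

Lemma CF_ext (P P' : pset R n) m : (forall x, P x <-> P' x) -> CF P m -> CF P' m.
Proof.
move=> HP [d [A [k [E [l [T [H1 H2]]]]]]].
exists d, A, k, E, l, T; split => // x; rewrite -HP; exact: H1.
Qed.

Lemma comb_closed m d k (A : 'M[R]_(m,d)) (E : 'M[R]_(k,d)) l T K
  (p : 'I_K -> pt R n) (w : 'I_K -> R) :
  (forall j, CFY A E l T (p j)) -> (forall j, 0 <= w j) -> \sum_j w j = 1 ->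
  CFY A E l T (\sum_j w j *: p j).
Proof.
move=> Hp Hw Hs.
have [f Hf] := choice Hp.
exists (\sum_j w j *: f j); split.
- move=> i; rewrite mulmx_sumr summxE; apply: sumr_ge0 => j _.
  rewrite -scalemxAr mxE; apply: mulr_ge0 => //; by case: (Hf j).
- rewrite mulmx_sumr big1 // => j _; rewrite -scalemxAr.
  by case: (Hf j) => _ -> _ _; rewrite scaler0.
- rewrite /lv mulmx_sumr summxE -Hs; apply: eq_bigr => j _.
  rewrite -scalemxAr mxE; case: (Hf j) => _ _ H _; by rewrite /lv in H; rewrite H mulr1.
- rewrite mulmx_sumr; apply: eq_bigr => j _; rewrite -scalemxAr.
  by case: (Hf j) => _ _ _ ->.
Qed.

Lemma conv_in (P : pset R n) x : P x -> conv P x.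
Proof.
move=> Px; exists 1%N, (fun _ => x), (fun _ => 1); split => //; split => //.
by rewrite big_ord1; split => //; rewrite big_ord1 scale1r.
Qed.

Lemma conv2 (P : pset R n) x1 x2 a b : P x1 -> P x2 -> 0 <= a -> 0 <= b -> a + b = 1 ->
  conv P (a *: x1 + b *: x2).
Proof.
move=> P1 P2 Ha Hb Hab.
exists 2%N, (fun j : 'I_2 => if j == ord0 then x1 else x2),
  (fun j : 'I_2 => if j == ord0 then a else b).
split; first by move=> j; case: (j == ord0).
split; first by move=> j; case: (j == ord0).
by rewrite !big_ord_recl !big_ord0 /= !addr0.
Qed.

Lemma CF_empty m : CF (fun _ => False) m.
Proof.
exists 1%N, 0, 0%N, 0, 0, 0; split.
  move=> x; split => // [[y [_ _ H _]]]; move: H; rewrite lv0 => /eqP.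
  by rewrite eq_sym oner_eq0.
by move=> y _ _; rewrite lv0 mul0mx.
Qed.

Lemma CF_point m (p : pt R n) : (0 < m)%N -> CF (fun x => x = p) m.
Proof.
move=> Hm.
exists 1%N, (const_mx 1 : 'M[R]_(m,1)), 0%N, 0, (1 : 'M[R]_1), (p : 'M[R]_(n,1)); split.
  move=> x; split=> [->|[y [_ _ H ->]]].
    exists 1; split; rewrite ?mulmx1 ?flatmx0 //.
      by move=> i; rewrite mxE ler01.
    by rewrite /lv mul1mx mxE.
  move: H; rewrite /lv mul1mx => H.
  by rewrite [y]mx11_scalar H mul_mx_scalar scale1r.
move=> y Hy _; rewrite /lv mul1mx.
have H0 : 0 <= y ord0 ord0.
  have := Hy (Ordinal Hm); rewrite mxE big_ord1 mxE mul1r.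
  by rewrite (ord1 (ord0 : 'I_1)).
split => // H; rewrite [y]mx11_scalar H.
by rewrite mul_mx_scalar scale0r.
Qed.

Lemma CF_and (P1 P2 : pset R n) m1 m2 :
  CF P1 m1 -> CF P2 m2 -> CF (fun x => P1 x /\ P2 x) (m1 + m2).
Proof.
move=> [d1 [A1 [k1 [E1 [l1 [T1 [H1 R1]]]]]]] [d2 [A2 [k2 [E2 [l2 [T2 [H2 R2]]]]]]].
pose A := block_mx A1 0 0 A2.
pose E := col_mx (block_mx E1 0 0 E2) (col_mx (row_mx l1 (- l2)) (row_mx T1 (- T2))).
pose l := row_mx l1 (0 : 'rV[R]_d2).
pose T := row_mx T1 (0 : 'M[R]_(n,d2)).
have EA : forall (y1 : 'cV[R]_d1) (y2 : 'cV[R]_d2), A *m col_mx y1 y2 = col_mx (A1 *m y1) (A2 *m y2).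
  by move=> y1 y2; rewrite /A mul_block_col !mul0mx addr0 add0r.
have EE : forall (y1 : 'cV[R]_d1) (y2 : 'cV[R]_d2), E *m col_mx y1 y2 = 0 <->
   [/\ E1 *m y1 = 0, E2 *m y2 = 0, lv l1 y1 = lv l2 y2 & T1 *m y1 = T2 *m y2].
  move=> y1 y2; rewrite /E mul_col_mx mul_block_col !mul0mx addr0 add0r mul_col_mx.
  rewrite !mul_row_col !mulNmx !col_eq0 !sub0P mx11P.
  by rewrite /lv; split=> [[[? ?] [? ?]]|[? ? ? ?]].
have El : forall (y1 : 'cV[R]_d1) (y2 : 'cV[R]_d2), lv l (col_mx y1 y2) = lv l1 y1.
  by move=> y1 y2; rewrite /l lv_row lv0 addr0.
have ET : forall (y1 : 'cV[R]_d1) (y2 : 'cV[R]_d2), T *m col_mx y1 y2 = T1 *m y1.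
  by move=> y1 y2; rewrite /T mul_row_col mul0mx addr0.
exists (d1 + d2)%N, A, (k1 + k2 + (1 + n))%N, E, l, T; split.
  move=> x; split.
    move=> [/H1 [y1 [Ha1 He1 Hl1 Hx1]] /H2 [y2 [Ha2 He2 Hl2 Hx2]]].
    exists (col_mx y1 y2); split.
    - by rewrite EA; apply/nonneg_col.
    - by apply/EE; split => //; rewrite ?Hl1 ?Hl2 // -Hx1 -Hx2.
    - by rewrite El.
    - by rewrite ET.
  move=> [y [Ha He Hl Hx]]; move: Ha He Hl Hx; rewrite -(vsubmxK y).
  rewrite EA El ET => /nonneg_col [Ha1 Ha2] /EE [He1 He2 Hll HT] Hl Hx.
  split; [apply/H1 | apply/H2].
    by exists (usubmx y).
  by exists (dsubmx y); split => //; rewrite -?Hll -?HT.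
move=> y; rewrite -(vsubmxK y) EA El ET => /nonneg_col [Ha1 Ha2] /EE [He1 He2 Hll HT].
exact: R1.
Qed.

Lemma CF_or (P1 P2 : pset R n) m1 m2 :
  CF P1 m1 -> CF P2 m2 -> CF (conv (fun x => P1 x \/ P2 x)) (m1 + m2).
Proof.
move=> [d1 [A1 [k1 [E1 [l1 [T1 [H1 R1]]]]]]] [d2 [A2 [k2 [E2 [l2 [T2 [H2 R2]]]]]]].
pose A := block_mx A1 0 0 A2.
pose E := block_mx E1 0 0 E2.
pose l := row_mx l1 l2.
pose T := row_mx T1 T2.
have EA : forall (y1 : 'cV[R]_d1) (y2 : 'cV[R]_d2), A *m col_mx y1 y2 = col_mx (A1 *m y1) (A2 *m y2).
  by move=> y1 y2; rewrite /A mul_block_col !mul0mx addr0 add0r.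
have EE : forall (y1 : 'cV[R]_d1) (y2 : 'cV[R]_d2), E *m col_mx y1 y2 = col_mx (E1 *m y1) (E2 *m y2).
  by move=> y1 y2; rewrite /E mul_block_col !mul0mx addr0 add0r.
have ET : forall (y1 : 'cV[R]_d1) (y2 : 'cV[R]_d2), T *m col_mx y1 y2 = T1 *m y1 + T2 *m y2.
  by move=> y1 y2; rewrite /T mul_row_col.
exists (d1 + d2)%N, A, (k1 + k2)%N, E, l, T; split.
  move=> x; split.
    move=> [k [p [w [Hp [Hw [Hs ->]]]]]]; apply: comb_closed => // j.
    case: (Hp j) => [/H1 [y1 [Ha1 He1 Hl1 Hx1]] | /H2 [y2 [Ha2 He2 Hl2 Hx2]]].
      exists (col_mx y1 0); split.
      - by rewrite EA mulmx0; apply/nonneg_col; split => // i; rewrite mxE.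
      - by rewrite EE He1 mulmx0 col_mx0.
      - by rewrite /l lv_row lvr0 addr0.
      - by rewrite ET mulmx0 addr0.
    exists (col_mx 0 y2); split.
    - by rewrite EA mulmx0; apply/nonneg_col; split => // i; rewrite mxE.
    - by rewrite EE He2 mulmx0 col_mx0.
    - by rewrite /l lv_row lvr0 add0r.
    - by rewrite ET mulmx0 add0r.
  move=> [y [Ha He Hl Hx]]; move: Ha He Hl Hx; rewrite -(vsubmxK y).
  set y1 := usubmx y; set y2 := dsubmx y.
  rewrite EA EE ET /l lv_row => /nonneg_col [Ha1 Ha2] /col_eq0 [He1 He2] Hl ->.
  have [a0 aT] := R1 y1 Ha1 He1; have [b0 bT] := R2 y2 Ha2 He2.
  have [Ha|Ha] := eqVneq (lv l1 y1) 0.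
    rewrite (aT Ha) add0r; apply: conv_in; right; apply/H2; exists y2; split => //.
    by move: Hl; rewrite Ha add0r.
  have [Hb|Hb] := eqVneq (lv l2 y2) 0.
    rewrite (bT Hb) addr0; apply: conv_in; left; apply/H1; exists y1; split => //.
    by move: Hl; rewrite Hb addr0.
  set a := lv l1 y1 in Ha Hl a0 aT *; set b := lv l2 y2 in Hb Hl b0 bT *.
  have -> : T1 *m y1 + T2 *m y2 = a *: (T1 *m (a^-1 *: y1)) + b *: (T2 *m (b^-1 *: y2)).
    by rewrite -!scalemxAr !scalerA !mulfV // !scale1r.
  apply: conv2 => //.
  - left; apply/H1; exists (a^-1 *: y1); split => //.
    + by move=> i; rewrite -scalemxAr mxE; apply: mulr_ge0 => //; rewrite invr_ge0.
    + by rewrite -scalemxAr He1 scaler0.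
    + by rewrite lvZ mulVf.
  - right; apply/H2; exists (b^-1 *: y2); split => //.
    + by move=> i; rewrite -scalemxAr mxE; apply: mulr_ge0 => //; rewrite invr_ge0.
    + by rewrite -scalemxAr He2 scaler0.
    + by rewrite lvZ mulVf.
move=> y; rewrite -(vsubmxK y) EA EE ET /l lv_row => /nonneg_col [Ha1 Ha2] /col_eq0 [He1 He2].
have [a0 aT] := R1 _ Ha1 He1; have [b0 bT] := R2 _ Ha2 He2.
split; first exact: addr_ge0.
move=> H0.
have Ha : lv l1 (usubmx y) = 0 by lra.
have Hb : lv l2 (dsubmx y) = 0 by lra.
by rewrite (aT Ha) (bT Hb) addr0.
Qed.


Lemma mxDE m p (M N : 'M[R]_(m,p)) i j : (M + N) i j = M i j + N i j.
Proof. by rewrite mxE. Qed.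
Lemma mxZE m p a (M : 'M[R]_(m,p)) i j : (a *: M) i j = a * M i j.
Proof. by rewrite mxE. Qed.
Lemma mxNE m p (M : 'M[R]_(m,p)) i j : (- M) i j = - M i j.
Proof. by rewrite mxE. Qed.
Lemma mxBE m p (M N : 'M[R]_(m,p)) i j : (M - N) i j = M i j - N i j.
Proof. by rewrite mxDE mxNE. Qed.
Lemma rowE m p (M : 'M[R]_(m,p)) i j : (row i M) ord0 j = M i j.
Proof. by rewrite mxE. Qed.
Lemma scalarE (a : R) : (a%:M : 'M[R]_1) ord0 ord0 = a.
Proof. by rewrite mxE eqxx mulr1n. Qed.

Lemma CF_leaf (Q : pset R n) sigma i (val : R) :
  (0 < sigma)%N -> in_unit_cube Q -> has_ext_form Q sigma ->
  CF (fun x => Q x /\ Defs.coord x i = val) sigma.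
Proof.
move=> Hs Hcube [dq [Aq [bq [Tq [tq HQ]]]]].
have Bnd : forall y1 w : 'cV[R]_dq, (forall r, bq r ord0 <= (Aq *m y1) r ord0) ->
    nonneg (Aq *m w) -> Tq *m w = 0.
  move=> y1 w Hy1 Hw.
  have Hin : forall s, 0 <= s -> forall j,
      0 <= (Tq *m y1 + tq) j ord0 + s * (Tq *m w) j ord0 <= 1.
    move=> s Hs0 j.
    have : Q (Tq *m (y1 + s *: w) + tq).
      apply/HQ; exists (y1 + s *: w); split => // r.
      rewrite mulmxDr -scalemxAr mxDE mxZE.
      apply: le_trans (Hy1 r) _; rewrite lerDl; apply: mulr_ge0 => //; exact: Hw.
    move=> /Hcube /(_ j); rewrite /Defs.coord mulmxDr -scalemxAr !mxDE mxZE.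
    by case/andP => H1 H2; apply/andP; split; lra.
  apply/matrixP => j k; rewrite (ord1 k) [X in _ = X]mxE.
  set a := (Tq *m y1 + tq) j ord0; set g := (Tq *m w) j ord0.
  have H0 := Hin 0 (lexx 0) j; rewrite mul0r addr0 in H0.
  case/andP: H0 => Ha0 Ha1; rewrite -/a in Ha0 Ha1.
  case: (ltgtP g 0) => Hg //.
  - have gn : g != 0 by apply/eqP => g0; move: Hg; rewrite g0 ltxx.
    have Hp : 0 <= 2 / - g by apply: divr_ge0; rewrite ?ler0n // oppr_ge0 ltW.
    have := Hin _ Hp j; rewrite -/a -/g.
    have -> : 2 / - g * g = -2 by field.
    by case/andP => H1 H2; exfalso; lra.
  - have gn : g != 0 by apply/eqP => g0; move: Hg; rewrite g0 ltxx.
    have Hp : 0 <= 2 / g by apply: divr_ge0; rewrite ?ler0n // ltW.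
    have := Hin _ Hp j; rewrite -/a -/g.
    have -> : 2 / g * g = 2 by field.
    by case/andP => H1 H2; exfalso; lra.
pose L := fun x => Q x /\ Defs.coord x i = val.
case: (pselect (exists x, L x)) => [[x1 Lx1]|Hne]; last first.
  apply: CF_ext (CF_empty sigma) => x; split => // Lx; apply: Hne; by exists x.
case: (pselect (exists x2, L x2 /\ x2 <> x1)) => [[x2 [Lx2 Hx12]]|Hsing]; last first.
  apply: CF_ext (CF_point x1 Hs) => x; split => [->//|Lx].
  case: (eqVneq x x1) => // /eqP H; exfalso; apply: Hsing; by exists x.
have [w1 [Hw1 Ex1]] := (HQ x1).1 Lx1.1.
have [w2 [Hw2 Ex2]] := (HQ x2).1 Lx2.1.
pose A := row_mx Aq (- bq).
pose E := row_mx (row i Tq) ((tq i ord0 - val)%:M : 'M[R]_1).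
pose l := row_mx (0 : 'rV[R]_dq) (1%:M : 'M[R]_1).
pose T := row_mx Tq tq.
have EA : forall w (a : R), A *m col_mx w a%:M = Aq *m w - a *: bq.
  by move=> w a; rewrite /A mul_row_col mulNmx mul_mx_scalar.
have EE : forall w (a : R), E *m col_mx w a%:M = 0 <->
    (Tq *m w) i ord0 + (tq i ord0 - val) * a = 0.
  move=> w a; rewrite mx11P /E mul_row_col mxDE -row_mul rowE -scalar_mxM scalarE.
  by rewrite [X in _ = X <-> _]mxE.
have El : forall w (a : R), lv l (col_mx w a%:M) = a.
  by move=> w a; rewrite /l lv_row lv0 add0r /lv mul1mx scalarE.
have ET : forall w (a : R), T *m col_mx w a%:M = Tq *m w + a *: tq.
  by move=> w a; rewrite /T mul_row_col mul_mx_scalar.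
have decomp : forall y : 'cV[R]_(dq + 1), y = col_mx (usubmx y) ((dsubmx y) ord0 ord0)%:M.
  by move=> y; rewrite -mx11_scalar vsubmxK.
exists (dq + 1)%N, A, 1%N, E, l, T; split.
  move=> x; split.
    move=> [Qx Hxi]; have [w [Hw Ex]] := (HQ x).1 Qx.
    exists (col_mx w 1%:M); split.
    - by move=> r; rewrite EA scale1r mxBE subr_ge0.
    - apply/EE; move: Hxi; rewrite /Defs.coord Ex mxDE mulr1 => H; lra.
    - by rewrite El.
    - by rewrite ET scale1r.
  move=> [y [Ha He Hl Hx]]; move: Ha He Hl Hx; rewrite (decomp y).
  set w := usubmx y; set a := dsubmx y ord0 ord0.
  rewrite EA EE El ET => Ha He Hl ->; rewrite Hl in Ha He; rewrite Hl scale1r.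
  split.
    by apply/HQ; exists w; split => // r; have := Ha r; rewrite scale1r mxBE subr_ge0.
  by rewrite /Defs.coord mxDE; move: He; rewrite mulr1 => H; lra.
move=> y; rewrite (decomp y); set w := usubmx y; set a := dsubmx y ord0 ord0.
rewrite EA EE El ET => Ha He.
have Hneg : 0 <= a.
  case: (lerP 0 a) => // Hlt; exfalso.
  pose z := a^-1 *: w.
  have Hz : forall r, (Aq *m z) r ord0 <= bq r ord0.
    move=> r; rewrite /z -scalemxAr mxZE ler_ndivrMl //.
    by have := Ha r; rewrite mxBE mxZE subr_ge0 mulrC.
  have T1 : Tq *m (w1 - z) = 0.
    apply: (Bnd w1) => // r; rewrite mulmxBr mxBE subr_ge0.
    exact: le_trans (Hz r) (Hw1 r).
  have T2 : Tq *m (w2 - z) = 0.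
    apply: (Bnd w2) => // r; rewrite mulmxBr mxBE subr_ge0.
    exact: le_trans (Hz r) (Hw2 r).
  apply: Hx12; rewrite Ex1 Ex2; congr (_ + _).
  by move/eqP: T1; move/eqP: T2; rewrite !mulmxBr !subr_eq0 => /eqP -> /eqP ->.
split => // a0; rewrite a0 scale0r addr0.
apply: (Bnd w1) => // r; have := Ha r; by rewrite a0 scale0r subr0.
Qed.

Lemma CF_to_ext (P : pset R n) m : (0 < m)%N -> CF P m -> has_ext_form P m.
Proof.
move=> Hm [d [A [k [E [l [T [H1 H2]]]]]]].
case: (pselect (exists x, P x)) => [[x0 /H1 [y0 [Ha0 He0 Hl0 Hx0]]]|Hne]; last first.
  exists 1%N, 0, (const_mx 1), 0, 0 => x; split => [Px|[y [Hy _]]].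
    by exfalso; apply: Hne; exists x.
  by have := Hy (Ordinal Hm); rewrite mul0mx !mxE ler10.
pose G := col_mx E l.
pose N := (kermx G^T)^T.
have GN : G *m N = 0.
  by apply: trmx_inj; rewrite trmx_mul trmxK mulmx_ker trmx0.
have [EN lN] : E *m N = 0 /\ l *m N = 0 by apply/col_eq0; rewrite -mul_col_mx.
exists d, (A *m N), (- (A *m y0)), (T *m N), (T *m y0) => x; split.
  move=> /H1 [y [Ha He Hl ->]].
  have : ((y - y0)^T <= kermx G^T)%MS.
    apply/sub_kermxP; rewrite -trmx_mul; apply/eqP; rewrite trmx_eq0; apply/eqP.
    rewrite /G mul_col_mx mulmxBr He He0 subrr; apply/col_eq0; split => //.
    rewrite mulmxBr; apply/sub0P/mx11P; by move: Hl Hl0; rewrite /lv => -> ->.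
  case/submxP => D HD.
  have ND : N *m D^T = y - y0 by rewrite /N -trmx_mul -HD trmxK.
  exists D^T; split.
    by move=> r; rewrite -mulmxA ND mulmxBr mxBE mxNE; have := Ha r; lra.
  by rewrite -mulmxA ND mulmxBr subrK.
move=> [z [Hz ->]]; apply/H1; exists (y0 + N *m z); split.
- move=> r; rewrite mulmxDr mxDE mulmxA; have := Hz r; rewrite mxNE; lra.
- by rewrite mulmxDr He0 mulmxA EN mul0mx addr0.
- by rewrite lvD Hl0 /lv mulmxA lN mul0mx mxE addr0.
- by rewrite mulmxDr mulmxA addrC.
Qed.


Lemma CF_polytope (P : pset R n) m : CF P m -> polytope P.
Proof.
move=> [d [A [k [E [l [T [H1 H2]]]]]]].
case: (pselect (exists x, P x)) => [[x0 Px0]|Hne]; last first.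
  exists 0%N, (fun _ => 0) => x; split => [Px|]; first by exfalso; apply: Hne; exists x.
  move=> [k' [p' [w' [Hp [_ [Hs _]]]]]]; case: k' p' w' Hp Hs => [|k''] p' w' Hp Hs.
    by move: Hs; rewrite big_ord0 => /eqP; rewrite eq_sym oner_eq0.
  by have [j _] := Hp ord0; case: j.
pose tight (y : 'cV[R]_d) : {set 'I_m} := [set r | (A *m y) r ord0 == 0].
pose Yset (y : 'cV[R]_d) := [/\ nonneg (A *m y), E *m y = 0 & lv l y = 1].
pose basic (y : 'cV[R]_d) := Yset y /\ (forall z, (forall r, r \in tight y -> (A *m z) r ord0 = 0) ->
      E *m z = 0 -> lv l z = 0 -> T *m z = 0).
have buniq : forall y y', basic y -> Yset y' -> tight y = tight y' -> T *m y = T *m y'.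
  move=> y y' [[Ha He Hl] Hb] [Ha' He' Hl'] Ht.
  apply/eqP; rewrite -subr_eq0 -mulmxBr; apply/eqP; apply: Hb.
  - move=> r Hr; have Hr' := Hr; rewrite Ht in Hr'; move: Hr Hr'.
    by rewrite !inE mulmxBr mxBE => /eqP -> /eqP ->; rewrite subrr.
  - by rewrite mulmxBr He He' subrr.
  - by rewrite lvD lvN Hl Hl' subrr.
pose K := #|{set 'I_m}|.
have Hpts : forall j : 'I_K, exists p, P p /\
    (forall y, basic y -> tight y = enum_val j -> p = T *m y).
  move=> j; case: (pselect (exists y, basic y /\ tight y = enum_val j)) => [[y [By Ty]]|Hno].
    exists (T *m y); split.
      by apply/H1; exists y; case: By => [[Ha He Hl] _]; split.
    move=> y' By' Ty'; apply: buniq => //; first by case: By'.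
    by rewrite Ty Ty'.
  by exists x0; split => // y By Ty; exfalso; apply: Hno; exists y.
have [pts Hpts'] := choice Hpts.
have half : forall y z, Yset y -> (forall r, r \in tight y -> (A *m z) r ord0 = 0) ->
    E *m z = 0 -> lv l z = 0 -> T *m z != 0 ->
    exists t, [/\ 0 < t, Yset (y + t *: z) & (#|tight y| < #|tight (y + t *: z)%R|)%N].
  move=> y z [Ha He Hl] Hz Ez lz Tz.
  have [r0 Hr0] : exists r, (A *m z) r ord0 < 0.
    case: (pselect (exists r, (A *m z) r ord0 < 0)) => // Hno; exfalso.
    have nz : nonneg (A *m z).
      by move=> r; rewrite leNgt; apply/negP => H; apply: Hno; exists r.
    have [_ H] := H2 z nz Ez; move/negP: Tz; apply; apply/eqP; exact: H lz.
  pose F := fun r => (A *m y) r ord0 / - (A *m z) r ord0.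
  have [rs Hrs Hmin] := @arg_minP _ _ _ r0 (fun r => (A *m z) r ord0 < 0) F Hr0.
  have rsnt : rs \notin tight y.
    by apply/negP => Hin; move: Hrs; rewrite (Hz rs Hin) ltxx.
  have ay : 0 < (A *m y) rs ord0.
    by rewrite lt_def (Ha rs) andbT; move: rsnt; rewrite inE.
  have tpos : 0 < F rs by rewrite /F divr_gt0 // oppr_gt0.
  have Ay' : forall r t, (A *m (y + t *: z)) r ord0 = (A *m y) r ord0 + t * (A *m z) r ord0.
    by move=> r t; rewrite mulmxDr -scalemxAr mxDE mxZE.
  exists (F rs); split => //.
  - split.
    + move=> r; rewrite Ay'; case: (lerP 0 ((A *m z) r ord0)) => Hzr.
        by apply: addr_ge0 => //; apply: mulr_ge0 => //; exact: ltW.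
      have := Hmin r Hzr; rewrite {2}/F ler_pdivlMr ?oppr_gt0 // mulrN => H; lra.
    + by rewrite mulmxDr -scalemxAr Ez He scaler0 addr0.
    + by rewrite lvD lvZ lz Hl mulr0 addr0.
  - apply: proper_card; apply/properP; split.
      apply/subsetP => r Hr; have := Hz r Hr; move: Hr.
      by rewrite !inE Ay' => /eqP -> ->; rewrite mulr0 addr0.
    exists rs => //; rewrite inE Ay' /F; apply/eqP.
    have nz : (A *m z) rs ord0 != 0 by apply/eqP => H0; move: Hrs; rewrite H0 ltxx.
    by field.
have step : forall y, Yset y -> ~ basic y -> exists y1 y2 a b,
    [/\ Yset y1, Yset y2, (#|tight y| < #|tight y1|)%N & (#|tight y| < #|tight y2|)%N] /\
    [/\ 0 <= a, 0 <= b, a + b = 1 & T *m y = a *: (T *m y1) + b *: (T *m y2)].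
  move=> y Yy By.
  have [z [Hz Ez lz Tz]] : exists z, [/\ (forall r, r \in tight y -> (A *m z) r ord0 = 0),
      E *m z = 0, lv l z = 0 & T *m z != 0].
    case: (pselect (exists z, [/\ (forall r, r \in tight y -> (A *m z) r ord0 = 0),
      E *m z = 0, lv l z = 0 & T *m z != 0])) => // Hno; exfalso.
    apply: By; split => // z Hz Ez lz.
    by case: (eqVneq (T *m z) 0) => // Tz; exfalso; apply: Hno; exists z; split.
  have [t1 [t1p Y1 C1]] := half y z Yy Hz Ez lz Tz.
  have [t2 [t2p Y2 C2]] : exists t, [/\ 0 < t, Yset (y + t *: - z) &
      (#|tight y| < #|tight (y + t *: - z)%R|)%N].
    apply: half => //.
    - by move=> r Hr; rewrite mulmxN mxNE (Hz r Hr) oppr0.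
    - by rewrite mulmxN Ez oppr0.
    - by rewrite lvN lz oppr0.
    - by rewrite mulmxN oppr_eq0.
  exists (y + t1 *: z), (y + t2 *: - z), (t2 / (t1 + t2)), (t1 / (t1 + t2)); split => //.
  have s0 : t1 + t2 != 0 by rewrite lt0r_neq0 // addr_gt0.
  split.
  - by rewrite divr_ge0 // ltW // addr_gt0.
  - by rewrite divr_ge0 // ltW // addr_gt0.
  - by field.
  - rewrite !mulmxDr -!scalemxAr mulmxN; apply/matrixP => i j.
    rewrite !(mxDE, mxZE, mxNE); field.
    by [].
have basic_case : forall y, basic y -> exists w : 'I_K -> R,
    [/\ (forall j, 0 <= w j), \sum_j w j = 1 & T *m y = \sum_j w j *: pts j].
  move=> y By; pose jr := enum_rank (tight y).
  have Hp : pts jr = T *m y by apply: (Hpts' jr).2 => //; rewrite enum_rankK.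
  exists (fun j => (j == jr)%:R); split.
  - by move=> j; rewrite ler0n.
  - by rewrite (bigD1 jr) //= eqxx big1 ?addr0 // => j /negbTE ->.
  - rewrite (bigD1 jr) //= eqxx scale1r big1 ?addr0 // => j /negbTE ->.
    by rewrite scale0r.
have claim : forall N y, (m - #|tight y| <= N)%N -> Yset y -> exists w : 'I_K -> R,
    [/\ (forall j, 0 <= w j), \sum_j w j = 1 & T *m y = \sum_j w j *: pts j].
  have cardm : forall y, (#|tight y| <= m)%N.
    by move=> y; have := max_card (mem (tight y)); rewrite card_ord.
  elim=> [|N IH] y HN Yy; case: (pselect (basic y)) => By; first exact: basic_case.
    have [y1 [y2 [a [b [[_ _ C1 _] _]]]]] := step y Yy By.
    by have := cardm y1; lia.
  exact: basic_case.
  have [y1 [y2 [a [b [[Y1 Y2 C1 C2] [a0 b0 ab ET]]]]]] := step y Yy By.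
  have [w1 [Hw1 Hs1 HT1]] := IH y1 (ltac:(lia)) Y1.
  have [w2 [Hw2 Hs2 HT2]] := IH y2 (ltac:(lia)) Y2.
  exists (fun j => a * w1 j + b * w2 j); split.
  - by move=> j; apply: addr_ge0; apply: mulr_ge0.
  - by rewrite big_split /= -!mulr_sumr Hs1 Hs2 !mulr1.
  - rewrite ET HT1 HT2 !scaler_sumr -big_split; apply: eq_bigr => j _.
    by rewrite !scalerA scalerDl.
exists K, pts => x; split.
  move=> /H1 [y [Ha He Hl ->]].
  have [w [Hw Hs HT]] := claim (m - #|tight y|)%N y (leqnn _) (And3 Ha He Hl).
  exists K, pts, w; split; first by move=> j; exists j.
  by split.
move=> [k' [p' [w' [Hp [Hw [Hs ->]]]]]]; apply/H1; apply: comb_closed => // j.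
have [j0 ->] := Hp j; apply/H1; exact: (Hpts' j0).1.
Qed.

End Part2.

Lemma fsize_gt0 (n : nat) (psi : formula n) : (0 < fsize psi)%N.
Proof.
by elim: psi => [i|p IH|p IHp q IHq|p IHp q IHq] //=; rewrite addn_gt0 IHp.
Qed.

Lemma CF_phiQ (R : realType) (n : nat) (Q : pset R n) sigma :
  (0 < sigma)%N -> in_unit_cube Q -> has_ext_form Q sigma ->
  forall psi, CF (phiQ Q psi) (fsize psi * sigma).
Proof.
move=> Hs Hcube Hext.
elim => [i|p IH|p IHp q IHq|p IHp q IHq] /=.
- by rewrite mul1n; exact: CF_leaf.
- case: p IH => [i|?|? ?|? ?] /= _; try exact: CF_empty.
  by rewrite mul1n; exact: CF_leaf.
- by rewrite mulnDl; exact: (CF_and IHp IHq).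
- by rewrite mulnDl; exact: (CF_or IHp IHq).
Qed.

Theorem theorem4p4 (R : realType) (n : nat) (phi : formula n) (Q : pset R n) :
  reduced phi ->
  convex Q -> in_unit_cube Q -> set_incl (@formula_set R n phi) Q ->
  (forall nu : nat,
     satisfies_notch_valid Q (@formula_set R n phi) nu ->
     satisfies_notch_valid (phiQ Q phi) (@formula_set R n phi) nu.+1) /\
  (forall sigma : nat, (0 < sigma)%N ->
     polytope Q -> has_ext_form Q sigma ->
     polytope (phiQ Q phi) /\ has_ext_form (phiQ Q phi) (fsize phi * sigma)).
Proof.
move=> _ _ Hcube _; split; first exact: part1.
move=> sigma Hs _ Hext.
have H := CF_phiQ Hs Hcube Hext phi.
split; first exact: CF_polytope H.
apply: CF_to_ext H; by rewrite muln_gt0 fsize_gt0 Hs.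
Qed.
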